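(* If $F$ is regular, i.e., $r''$ is bounded above on some interval $(1-\delta,1)$ with $\delta\in(0,1)$, then there exists $\alpha>1$ such that $r(v)r''(v)+r'(v)\le 1$ for every $v\in(0,1)$ with $\psi(v)\ge 1/\alpha$.
   Context: Let $F$ be a probability distribution on $[0,1]$ with support $[0,1]$ admitting a twice continuously differentiable density $f:(0,1)\to\mathbb{R}_{>0}$. Define the inverse hazard rate $r(v)=(1-F(v))/f(v)$ and the virtual valuation $\psi(v)=v-r(v)$ on $(0,1)$, and assume $\psi'(v)>0$ whenever $\psi(v)>0$. *)

(* Defs.v *)
From Stdlib Require Import Reals.
From Coquelicot Require Import Coquelicot.
Open Scope R_scope.

Definition C2_on_01 (f : R -> R) : Prop :=
  forall x, 0 < x < 1 ->
    ex_derive f x /\ ex_derive (Derive f) x /\ continuous (Derive_n f 2) x.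

Definition cdf_with_density (F f : R -> R) : Prop :=
  (forall x, 0 < x < 1 -> is_derive F x (f x)) /\
  filterlim F (at_right 0) (locally 0) /\
  filterlim F (at_left 1) (locally 1).

Definition inv_hazard (F f : R -> R) (v : R) : R := (1 - F v) / f v.

Definition virt_val (F f : R -> R) (v : R) : R := v - inv_hazard F f v.

Definition regular (F f : R -> R) : Prop :=
  exists delta M, 0 < delta < 1 /\
    forall v, 1 - delta < v < 1 -> Derive_n (inv_hazard F f) 2 v <= M.

(* Main.v *)
Require Import Defs.
From Stdlib Require Import Reals Lra.
From Coquelicot Require Import Coquelicot.
Open Scope R_scope.

Lemma mvt (g dg : R -> R) a b : a < b ->
  (forall x, a <= x <= b -> is_derive g x (dg x)) ->
  exists c, a <= c <= b /\ g b - g a = dg c * (b - a).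
Proof.
  intros hab hd.
  destruct (MVT_gen g a b dg) as [c [hc e]].
  - intros x hx. rewrite Rmin_left in hx by lra. rewrite Rmax_right in hx by lra.
    apply hd; lra.
  - intros x hx. rewrite Rmin_left in hx by lra. rewrite Rmax_right in hx by lra.
    apply continuity_pt_filterlim.
    apply (ex_derive_continuous (K:=R_AbsRing) (V:=R_NormedModule) g x).
    exists (dg x). apply hd; lra.
  - rewrite Rmin_left in hc by lra. rewrite Rmax_right in hc by lra.
    exists c; split; auto.
Qed.

Lemma F_le1 (F f : R -> R) (hF : cdf_with_density F f)
  (hfpos : forall v, 0 < v < 1 -> 0 < f v) :
  forall x, 0 < x < 1 -> F x <= 1.
Proof.
  destruct hF as [hd [_ hl]].
  assert (mono : forall x y, 0 < x -> x <= y -> y < 1 -> F x <= F y).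
  { intros x y hx hxy hy. destruct (Req_dec x y) as [<-|hne]; [lra|].
    destruct (mvt F f x y) as [c [hc e]]; [lra| |].
    - intros z hz; apply hd; lra.
    - assert (0 < f c) by (apply hfpos; lra). nra. }
  intros x hx. destruct (Rle_lt_dec (F x) 1) as [h|h]; auto.
  exfalso.
  apply filterlim_locally with (eps := mkposreal (F x - 1) ltac:(lra)) in hl.
  destruct hl as [del hdel].
  set (y := Rmax x (1 - del/2)).
  assert (hy1 : x <= y) by apply Rmax_l.
  assert (hy2 : 1 - del/2 <= y) by apply Rmax_r.
  assert (hy3 : y < 1).
  { unfold y; apply Rmax_lub_lt; destruct del; simpl in *; lra. }
  assert (hb : ball 1 del y).
  { unfold ball; simpl; unfold AbsRing_ball, abs, minus, plus, opp; simpl.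
    destruct del; simpl in *. apply Rabs_def1; lra. }
  specialize (hdel y hb hy3).
  unfold ball in hdel; simpl in hdel; unfold AbsRing_ball, abs, minus, plus, opp in hdel; simpl in hdel.
  apply Rabs_def2 in hdel. specialize (mono x y (proj1 hx) hy1 hy3). lra.
Qed.

Definition gder (F f : R -> R) (y : R) : R :=
  ((0 - f y) * f y - (1 - F y) * Derive f y) / (f y ^ 2).

Lemma r_der (F f : R -> R) (hF : cdf_with_density F f)
  (hfpos : forall v, 0 < v < 1 -> 0 < f v) (hf2 : C2_on_01 f) :
  forall x, 0 < x < 1 -> is_derive (inv_hazard F f) x (gder F f x).
Proof.
  intros x hx. destruct hF as [hd _].
  unfold inv_hazard, gder.
  apply (is_derive_div (fun t => 1 - F t) f).
  - apply (is_derive_minus (fun _ => 1) F x 0 (f x)).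
    + apply (is_derive_const (K:=R_AbsRing) (V:=R_NormedModule) 1 x).
    + apply hd; auto.
  - destruct (hf2 x hx) as [[l hl] _]. rewrite (is_derive_unique _ _ _ hl). exact hl.
  - assert (0 < f x) by (apply hfpos; auto). lra.
Qed.

Lemma r_der2 (F f : R -> R) (hF : cdf_with_density F f)
  (hfpos : forall v, 0 < v < 1 -> 0 < f v) (hf2 : C2_on_01 f) :
  forall x, 0 < x < 1 -> ex_derive (Derive (inv_hazard F f)) x.
Proof.
  intros x hx.
  apply (ex_derive_ext_loc (gder F f)).
  - assert (he : 0 < Rmin x (1 - x)) by (apply Rmin_glb_lt; lra).
    exists (mkposreal _ he). intros y hy.
    unfold ball in hy; simpl in hy; unfold AbsRing_ball, abs, minus, plus, opp in hy; simpl in hy.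
    apply Rabs_def2 in hy.
    pose proof (Rmin_l x (1 - x)). pose proof (Rmin_r x (1 - x)).
    symmetry. apply is_derive_unique. apply r_der; auto. lra.
  - destruct hF as [hd _]. destruct (hf2 x hx) as [h1 [h2 _]].
    assert (0 < f x) by (apply hfpos; auto).
    unfold gder. apply ex_derive_div.
    + apply (ex_derive_minus (fun y => (0 - f y) * f y) (fun y => (1 - F y) * Derive f y)).
      * apply ex_derive_mult; auto.
        apply (ex_derive_minus (fun _ => 0) f); auto. apply (ex_derive_const (K:=R_AbsRing) (V:=R_NormedModule)).
      * apply ex_derive_mult; auto.
        apply (ex_derive_minus (fun _ => 1) F). apply (ex_derive_const (K:=R_AbsRing) (V:=R_NormedModule)).
        exists (f x); apply hd; auto.
    + apply ex_derive_pow; auto.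
    + apply pow_nonzero. lra.
Qed.

Theorem lemma7 (F f : R -> R)
  (hF : cdf_with_density F f)
  (hfpos : forall v, 0 < v < 1 -> 0 < f v)
  (hf2 : C2_on_01 f)
  (hmon : forall v, 0 < v < 1 -> 0 < virt_val F f v ->
            0 < Derive (virt_val F f) v)
  (hreg : regular F f) :
  exists alpha, 1 < alpha /\
    forall v, 0 < v < 1 -> / alpha <= virt_val F f v ->
      inv_hazard F f v * Derive_n (inv_hazard F f) 2 v
        + Derive (inv_hazard F f) v <= 1.
Proof.
  destruct hreg as [d [M [[d0 d1] hM]]].
  set (M' := Rmax M 1).
  assert (hM1 : 1 <= M') by apply Rmax_r.
  assert (hMM : M <= M') by apply Rmax_l.
  set (h := Rmin (d/4) (1/(4*M'))).
  assert (hh1 : h <= d/4) by apply Rmin_l.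
  assert (hh2 : h <= 1/(4*M')) by apply Rmin_r.
  assert (hh0 : 0 < h).
  { apply Rmin_glb_lt. lra. apply Rdiv_lt_0_compat; lra. }
  assert (hhM : h * M' <= 1/4).
  { apply Rmult_le_compat_r with (r := M') in hh2; [|lra].
    replace (1 / (4 * M') * M') with (1/4) in hh2 by (field; lra). lra. }
  set (eps := h/4).
  exists (/ (1 - eps)). split.
  { rewrite <- Rinv_1. apply Rinv_lt_contravar; unfold eps; lra. }
  rewrite Rinv_inv.
  set (r := inv_hazard F f).
  intros v hv hpsi.
  assert (hr0 : forall x, 0 < x < 1 -> 0 <= r x).
  { intros x hx. unfold r, inv_hazard.
    pose proof (F_le1 F f hF hfpos x hx). pose proof (hfpos x hx).
    apply Rmult_le_pos; [lra|]. left; apply Rinv_0_lt_compat; lra. }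
  pose proof (hr0 v hv) as hrv.
  unfold virt_val in hpsi. fold r in hpsi.
  assert (hR2 : forall x, 1 - d < x < 1 -> Derive_n r 2 x <= M') by
    (intros x hx; apply Rle_trans with M; auto).
  assert (hD : forall x, 0 < x < 1 -> is_derive r x (Derive r x)).
  { intros x hx. pose proof (r_der F f hF hfpos hf2 x hx) as H.
    replace (Derive r x) with (gder F f x) by (symmetry; apply is_derive_unique; exact H).
    exact H. }
  assert (hD2 : forall x, 0 < x < 1 -> is_derive (Derive r) x (Derive_n r 2 x)).
  { intros x hx. destruct (r_der2 F f hF hfpos hf2 x hx) as [l hl].
    change (Derive_n r 2 x) with (Derive (Derive r) x).
    replace (Derive (Derive r) x) with l by (symmetry; apply is_derive_unique; exact hl).
    exact hl. }
  destruct (Rle_lt_dec (r v * Derive_n r 2 v + Derive r v) 1) as [ok|bad]; auto.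
  exfalso.
  assert (hv2 : 1 - d < v) by (unfold eps in *; lra).
  pose proof (hR2 v (conj hv2 (proj2 hv))) as hr2v.
  assert (r v * Derive_n r 2 v <= r v * M') by (apply Rmult_le_compat_l; auto).
  assert (hrle : r v <= eps) by lra.
  assert (r v * M' <= eps * M') by (apply Rmult_le_compat_r; lra).
  assert (hder : 1 - 1/16 < Derive r v) by (unfold eps in *; lra).
  destruct (mvt r (Derive r) (v - h) v) as [c [hc ec]]; [lra| |].
  { intros x hx. apply hD. unfold eps in *; lra. }
  destruct (Req_dec c v) as [->|hcv].
  { assert (Derive r v * (v - (v - h)) > h/2) by nra.
    pose proof (hr0 (v - h) ltac:(unfold eps in *; lra)). unfold eps in *; lra. }
  destruct (mvt (Derive r) (Derive_n r 2) c v) as [c' [hc' ec']]; [lra| |].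
  { intros x hx. apply hD2. unfold eps in *; lra. }
  pose proof (hR2 c' ltac:(unfold eps in *; lra)).
  assert (Derive_n r 2 c' * (v - c) <= M' * h) by nra.
  assert (Derive r c > 1/2) by lra.
  assert (Derive r c * (v - (v - h)) > h/2) by nra.
  pose proof (hr0 (v - h) ltac:(unfold eps in *; lra)). unfold eps in *; lra.
Qed.
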